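(* Let $X$ be a nonnegative integer-valued random variable whose PGF $X(z)$ has radius of convergence $r>1$, mean $\mu=X'(1)>0$ and variance $\sigma^2=X''(1)-X'(1)^2+X'(1)>0$, such that $|X(z)|<X(r_1)$ whenever $|z|=r_1$, $z\ne r_1$, $r_1\in(0,r)$. For positive integers $n,s$ let $A(z)=X(z)^n$, $\mu_A=n\mu<s$, with degree of $X(z)$ larger than $s/n$. Suppose $\frac{n\mu}{s}=1-\frac{\gamma}{\sqrt s}$ with $\gamma$ bounded away from $0$ and $\infty$ as $s\to\infty$, let $a_0=\sqrt{2\mu}/\sigma$, $b_0=\frac{\gamma\sqrt\mu}{\sigma\sqrt2}$, and for integers $k$ with $k=o(s)$ let $Z_k$ denote the zero of $z^s-A(z)$ in $1<|z|<r$ satisfying $Z_k=1+\frac{a_0}{\sqrt s}\big(b_0+\sqrt{b_0^2-2\pi i k}\big)+O\big(\frac{1+|k|}{s}\big)$ (principal square root). Then, when $k=o(s)$, $$-\frac{s-\mu_A}{sZ_k^{s-1}-A'(Z_k)}=\frac{b_0}{\sqrt{b_0^2-2\pi i k}}\,\frac{1}{Z_k^{s-1}}\Big(1+O\Big(\frac{1+|k|}{\sqrt s}\Big)\Big),\qquad s\to\infty.$$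
   Context: $O$-terms refer to $s\to\infty$ with constants independent of $s$ and $k$. *)

(* Defs.v *)
From Stdlib Require Import Reals.
From Coquelicot Require Import Coquelicot.
Open Scope R_scope.

Fixpoint cpow (z : C) (n : nat) : C :=
  match n with
  | O => RtoC 1
  | S m => Cmult z (cpow z m)
  end.

Definition pgf (p : nat -> R) (z : C) : C :=
  (Series (fun j => p j * Re (cpow z j)), Series (fun j => p j * Im (cpow z j))).

Definition is_distribution (p : nat -> R) : Prop :=
  (forall j, 0 <= p j) /\ is_series p 1.

Definition pgf_mean (p : nat -> R) : R := Series (fun j => INR j * p j).

Definition pgf_d2 (p : nat -> R) : R := Series (fun j => INR j * (INR j - 1) * p j).

Definition pgf_var (p : nat -> R) : R :=
  pgf_d2 p - (pgf_mean p) ^ 2 + pgf_mean p.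

(* Principal square root of a complex number (branch cut on the negative
   real axis; on the cut the root with positive imaginary part). *)
Definition csqrt (w : C) : C :=
  (sqrt ((Cmod w + Re w) / 2),
   if Rle_dec 0 (Im w) then sqrt ((Cmod w - Re w) / 2)
   else - sqrt ((Cmod w - Re w) / 2)).

(* Main.v *)
Require Import Defs.
From Stdlib Require Import Reals ZArith Lra Psatz.
From Coquelicot Require Import Coquelicot.
Open Scope R_scope.

Lemma cpow_mod (z : C) n : Cmod (cpow z n) = Cmod z ^ n.
Proof. induction n; simpl. apply Cmod_1. rewrite Cmod_mult, IHn; ring. Qed.

Lemma cpow_add (z : C) m n : cpow z (m + n) = (cpow z m * cpow z n)%C.
Proof. induction m; simpl. ring. rewrite IHm; ring. Qed.

Lemma cpow_one n : cpow (RtoC 1) n = RtoC 1.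
Proof. induction n; simpl. auto. rewrite IHn; ring. Qed.

Lemma cpow_RtoC (x : R) n : cpow (RtoC x) n = RtoC (x ^ n).
Proof. induction n; simpl. auto. rewrite IHn, RtoC_mult; auto. Qed.

Lemma cpow_nz (z : C) n : z <> 0%C -> cpow z n <> 0%C.
Proof. intros H. apply Cmod_gt_0. rewrite cpow_mod. apply pow_lt. now apply Cmod_gt_0. Qed.

Lemma pow_le_S (M : R) j : 1 <= M -> M ^ j <= M ^ (S j).
Proof. intros H. simpl. assert (0 <= M ^ j) by (apply pow_le; lra). nra. Qed.

Lemma mono1 (a b : C) (M : R) j : Cmod a <= M -> Cmod b <= M -> 1 <= M ->
  Cmod (cpow a j - cpow b j)%C <= INR j * Cmod (a - b)%C * M ^ j.
Proof.
  intros Ha Hb HM. induction j.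
  - simpl. replace (1 - 1)%C with (RtoC 0) by ring. rewrite Cmod_0. lra.
  - replace (cpow a (S j) - cpow b (S j))%C with
      (a * (cpow a j - cpow b j) + (a - b) * cpow b j)%C by (simpl; ring).
    eapply Rle_trans. apply Cmod_triangle. rewrite !Cmod_mult, cpow_mod.
    assert (0 <= Cmod (a - b)%C) by apply Cmod_ge_0.
    assert (0 <= Cmod b ^ j) by (apply pow_le; apply Cmod_ge_0).
    assert (Cmod b ^ j <= M ^ j) by (apply pow_incr; split; [apply Cmod_ge_0|auto]).
    assert (0 <= M ^ j) by (apply pow_le; lra).
    assert (0 <= Cmod (cpow a j - cpow b j)%C) by apply Cmod_ge_0.
    assert (0 <= Cmod a) by apply Cmod_ge_0.
    rewrite S_INR. simpl pow.
    assert (0 <= INR j) by apply pos_INR.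
    assert (Cmod a * Cmod (cpow a j - cpow b j)%C <= M * (INR j * Cmod (a - b)%C * M ^ j))
      by (apply Rmult_le_compat; auto).
    assert (Cmod (a - b)%C * Cmod b ^ j <= Cmod (a - b)%C * (M * M ^ j)).
    { apply Rmult_le_compat_l; auto. pose proof (pow_le_S M j HM) as HS. simpl in HS. lra. }
    nra.
Qed.

Lemma mono2 (a b : C) (M : R) j : Cmod a <= M -> Cmod b <= M -> 1 <= M ->
  Cmod (cpow a j - cpow b j - RtoC (INR j) * cpow b (j - 1) * (a - b))%C
    <= INR j ^ 2 * Cmod (a - b)%C ^ 2 * M ^ j.
Proof.
  intros Ha Hb HM. induction j.
  - simpl. replace (1 - 1 - 0 * 1 * (a - b))%C with (RtoC 0) by ring.
    rewrite Cmod_0. lra.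
  - destruct j.
    + simpl. replace (a * 1 - b * 1 - 1 * 1 * (a - b))%C with (RtoC 0) by ring.
      rewrite Cmod_0. assert (0 <= Cmod (a - b)%C) by apply Cmod_ge_0. nra.
    + replace (S (S j) - 1)%nat with (S j) in * by lia.
      replace (S j - 1)%nat with j in IHj by lia.
      replace (cpow a (S (S j)) - cpow b (S (S j)) - RtoC (INR (S (S j))) * cpow b (S j) * (a - b))%C
        with (a * (cpow a (S j) - cpow b (S j) - RtoC (INR (S j)) * cpow b j * (a - b))
              + RtoC (INR (S j)) * (a - b) * (a - b) * cpow b j)%C.
      2:{ rewrite (S_INR (S j)). rewrite RtoC_plus. simpl cpow. ring. }
      eapply Rle_trans. apply Cmod_triangle. rewrite !Cmod_mult, cpow_mod, Cmod_R.
      rewrite Rabs_right by (apply Rle_ge, pos_INR).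
      set (d := Cmod (a - b)%C). assert (0 <= d) by apply Cmod_ge_0.
      assert (0 <= Cmod b ^ j) by (apply pow_le; apply Cmod_ge_0).
      assert (Cmod b ^ j <= M ^ j) by (apply pow_incr; split; [apply Cmod_ge_0|auto]).
      assert (0 <= M ^ j) by (apply pow_le; lra).
      set (e := Cmod _) in IHj |- *.
      assert (0 <= e) by apply Cmod_ge_0.
      assert (0 <= Cmod a) by apply Cmod_ge_0.
      rewrite !S_INR in *. simpl pow in *.
      assert (0 <= INR j) by apply pos_INR.
      assert (Cmod a * e <= M * ((INR j + 1) * ((INR j + 1) * 1) * (d * (d * 1)) * (M * M ^ j))).
      { apply Rmult_le_compat; auto. }
      assert ((INR j + 1) * d * d * Cmod b ^ j <= (INR j + 1) * d * d * (M*(M * M ^ j))).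
      { apply Rmult_le_compat_l. apply Rmult_le_pos; [apply Rmult_le_pos|]; lra.
        pose proof (pow_le_S M j HM) as HS. pose proof (pow_le_S M (S j) HM) as HS2. simpl in HS, HS2. lra. }
      assert (0 <= d*d*(M*(M*M^j))) by (apply Rmult_le_pos; [nra| apply Rmult_le_pos; nra]).
      set (Q := d*d*(M*(M*M^j))) in *.
      assert (Cmod a * e <= (INR j + 1) * (INR j + 1) * Q) by (unfold Q; nra).
      assert ((INR j + 1) * d * d * Cmod b ^ j <= (INR j + 1) * Q) by (unfold Q; nra).
      unfold Q in *. nra.
Qed.

Definition csum (t : nat -> C) : C :=
  (Series (fun j => Re (t j)), Series (fun j => Im (t j))).
Definition acv (t : nat -> C) : Prop := ex_series (fun j => Cmod (t j)).

Lemma im_le_Cmod (c : C) : Rabs (Im c) <= Cmod c.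
Proof.
  destruct c as [x y]. unfold Cmod. simpl. rewrite <- sqrt_Rsqr_abs.
  apply sqrt_le_1_alt. unfold Rsqr. nra.
Qed.

Lemma ex_series_le_R (a b : nat -> R) : (forall n, Rabs (a n) <= b n) -> ex_series b -> ex_series a.
Proof. intros H Hb. apply (ex_series_le a b); auto. Qed.

Lemma Series_0 (k : nat) : Series (fun _ => 0) = 0.
Proof. rewrite (Series_ext _ (fun n => 0 * (fun _ => 0) n)) by (intros; simpl; ring).
  rewrite Series_scal_l. ring. Qed.

Lemma exs_scal (c : R) (a : nat -> R) : ex_series a -> ex_series (fun n => c * a n).
Proof. intros H. apply ex_series_ext with (fun n => a n * c). intros; apply Rmult_comm.
  apply ex_series_scal_r; auto. Qed.
Lemma exs_plus (a b : nat -> R) : ex_series a -> ex_series b -> ex_series (fun n => a n + b n).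
Proof. intros H H'. apply ex_series_ext with (fun n => plus (a n) (b n)). intros; reflexivity.
  apply (@ex_series_plus R_AbsRing R_NormedModule); auto. Qed.
Lemma exs_minus (a b : nat -> R) : ex_series a -> ex_series b -> ex_series (fun n => a n - b n).
Proof. intros H H'. apply ex_series_ext with (fun n => plus (a n) (opp (b n))). intros; reflexivity.
  apply (@ex_series_minus R_AbsRing R_NormedModule); auto. Qed.

Lemma acv_re t : acv t -> ex_series (fun j => Re (t j)).
Proof. intros H. apply ex_series_le_R with (fun j => Cmod (t j)); auto. intros; apply re_le_Cmod. Qed.
Lemma acv_im t : acv t -> ex_series (fun j => Im (t j)).
Proof. intros H. apply ex_series_le_R with (fun j => Cmod (t j)); auto. intros; apply im_le_Cmod. Qed.

Lemma acv_le t (b : nat -> R) : (forall j, Cmod (t j) <= b j) -> ex_series b -> acv t.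
Proof.
  intros H Hb. apply ex_series_le_R with b; auto. intros. rewrite Rabs_right; auto.
  apply Rle_ge, Cmod_ge_0.
Qed.

Lemma csum_plus t u : acv t -> acv u -> csum (fun j => t j + u j)%C = (csum t + csum u)%C.
Proof.
  intros Ht Hu. unfold csum. apply injective_projections; simpl.
  - rewrite <- Series_plus by (apply acv_re; auto). apply Series_ext. intros; reflexivity.
  - rewrite <- Series_plus by (apply acv_im; auto). apply Series_ext. intros; reflexivity.
Qed.

Lemma csum_minus t u : acv t -> acv u -> csum (fun j => t j - u j)%C = (csum t - csum u)%C.
Proof.
  intros Ht Hu. unfold csum. apply injective_projections; simpl.
  - transitivity (Series (fun j => Re (t j) - Re (u j))). apply Series_ext; intros; unfold Cminus, Cplus, Copp, Re, Im; simpl; ring.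
    rewrite Series_minus by (apply acv_re; auto). simpl; ring.
  - transitivity (Series (fun j => Im (t j) - Im (u j))). apply Series_ext; intros; unfold Cminus, Cplus, Copp, Re, Im; simpl; ring.
    rewrite Series_minus by (apply acv_im; auto). simpl; ring.
Qed.

Lemma csum_scal (c : C) t : acv t -> csum (fun j => c * t j)%C = (c * csum t)%C.
Proof.
  intros Ht. unfold csum. destruct c as [x y]. apply injective_projections; simpl.
  - rewrite <- !Series_scal_l. rewrite <- Series_minus.
    apply Series_ext. intros; unfold Re, Im; simpl; ring.
    apply exs_scal, acv_re; auto. apply exs_scal, acv_im; auto.
  - rewrite <- !Series_scal_l. rewrite <- Series_plus.
    apply Series_ext. intros; unfold Re, Im; simpl; ring.
    apply exs_scal, acv_im; auto. apply exs_scal, acv_re; auto.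
Qed.

Lemma csum_real (f : nat -> R) : csum (fun j => RtoC (f j)) = RtoC (Series f).
Proof.
  unfold csum. apply injective_projections; simpl.
  - apply Series_ext; intros; reflexivity.
  - apply (Series_0 0%nat).
Qed.

Lemma series_le_gen (a b : nat -> R) : (forall n, a n <= b n) -> ex_series a -> ex_series b ->
  Series a <= Series b.
Proof.
  intros H Ha Hb.
  assert (0 <= Series (fun n => b n - a n)).
  { rewrite <- (Series_0 0%nat). apply Series_le. intros; specialize (H n); lra.
    apply exs_minus; auto. }
  rewrite Series_minus in H0; auto. lra.
Qed.

Lemma csum_norm t : acv t -> Cmod (csum t) <= Series (fun j => Cmod (t j)).
Proof.
  intros Ht. set (c := csum t).
  destruct (Req_dec (Cmod c) 0) as [H0|H0].
  { rewrite H0. rewrite <- (Series_0 0%nat). apply Series_le.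
    intros; split; [lra| apply Cmod_ge_0]. exact Ht. }
  assert (Hc : 0 < Cmod c) by (pose proof (Cmod_ge_0 c); lra).
  set (u1 := Re c / Cmod c). set (u2 := Im c / Cmod c).
  assert (Hu : u1 ^ 2 + u2 ^ 2 = 1).
  { unfold u1, u2. pose proof (Cmod2_alt c). field_simplify; [|lra]. rewrite <- H. field. lra. }
  assert (E : Cmod c = Series (fun j => Re (t j) * u1 + Im (t j) * u2)).
  { rewrite Series_plus.
    rewrite (Series_ext _ (fun j => u1 * Re (t j))) by (intros; apply Rmult_comm).
    rewrite (Series_ext (fun j => Im (t j) * u2) (fun j => u2 * Im (t j))) by (intros; apply Rmult_comm).
    rewrite !Series_scal_l.
    change (Series (fun j => Re (t j))) with (Re c). change (Series (fun j => Im (t j))) with (Im c).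
    unfold u1, u2. pose proof (Cmod2_alt c). field_simplify; [|lra]. rewrite <- H. field. lra.
    apply ex_series_ext with (fun j => u1 * Re (t j)). intros; apply Rmult_comm.
    apply exs_scal, acv_re; auto.
    apply ex_series_ext with (fun j => u2 * Im (t j)). intros; apply Rmult_comm.
    apply exs_scal, acv_im; auto. }
  rewrite E. apply series_le_gen; auto.
  - intros j. destruct (t j) as [x y]. unfold Cmod, Re, Im; simpl.
    set (m := sqrt (x ^ 2 + y ^ 2)).
    assert (0 <= m) by apply sqrt_pos.
    assert (m * m = x ^ 2 + y ^ 2) by (apply sqrt_sqrt; nra).
    assert (HH : (x*u1+y*u2)^2 + (x*u2 - y*u1)^2 = (x^2+y^2)*(u1^2+u2^2)) by ring.
    rewrite Hu in HH.
    assert (0 <= (x*u2 - y*u1)^2) by (apply pow2_ge_0).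
    assert ((x * u1 + y * u2) ^ 2 <= m * m) by lra.
    destruct (Rle_or_lt (x*u1+y*u2) m) as [Hl|Hl]; auto.
    assert (m * m < (x*u1+y*u2) * (x*u1+y*u2)) by (apply Rmult_le_0_lt_compat; lra).
    simpl in *; lra.
  - apply exs_plus. apply ex_series_ext with (fun j => u1 * Re (t j)). intros; apply Rmult_comm.
    apply exs_scal, acv_re; auto.
    apply ex_series_ext with (fun j => u2 * Im (t j)). intros; apply Rmult_comm.
    apply exs_scal, acv_im; auto.
Qed.

Section Gen.
Variable p : nat -> R.
Hypothesis Hp0 : forall j, 0 <= p j.
Hypothesis Hp1 : is_series p 1.
Variable Rr : R.
Hypothesis HR : 1 <= Rr.
Let wj := fun j => p j * (1 + INR j) ^ 3 * Rr ^ j.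
Hypothesis Hw : ex_series wj.
Let W := Series wj.

Lemma wj_pos j : 0 <= wj j.
Proof. unfold wj. apply Rmult_le_pos. apply Rmult_le_pos; auto. apply pow_le.
  pose proof (pos_INR j); lra. apply pow_le; lra. Qed.

Lemma W_pos : 0 <= W.
Proof. unfold W. rewrite <- (Series_0 0%nat). apply Series_le; auto. intros; split; [lra|apply wj_pos]. Qed.

Lemma dom_acv (t : nat -> C) (c : R) : (forall j, Cmod (t j) <= c * wj j) -> acv t.
Proof. intros H. apply acv_le with (fun j => c * wj j); auto. apply exs_scal; auto. Qed.

Lemma dom_bound (t : nat -> C) (c : R) : (forall j, Cmod (t j) <= c * wj j) ->
  Cmod (csum t) <= c * W.
Proof.
  intros H. eapply Rle_trans. apply csum_norm. eapply dom_acv; eauto.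
  unfold W. rewrite <- Series_scal_l. apply Series_le; auto.
  intros; split; [apply Cmod_ge_0|auto]. apply exs_scal; auto.
Qed.

Definition Xc (z : C) := csum (fun j => RtoC (p j) * cpow z j)%C.
Definition X1c (z : C) := csum (fun j => RtoC (p j) * (RtoC (INR j) * cpow z (j - 1)))%C.
Definition Yc (z : C) := csum (fun j => RtoC (p j) * (RtoC (INR j) * cpow z j))%C.

Lemma pow_le_mono (x : R) a b : 1 <= x -> (a <= b)%nat -> x ^ a <= x ^ b.
Proof. intros. apply Rle_pow; auto. Qed.

Lemma cube_ge (j : nat) : 1 <= (1 + INR j) ^ 3 /\ INR j <= (1 + INR j) ^ 3 /\ INR j ^ 2 <= (1 + INR j) ^ 3.
Proof. pose proof (pos_INR j). split; [|split]; nra. Qed.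

Lemma modpow_le (z : C) j : Cmod z <= Rr -> Cmod (cpow z j) <= Rr ^ j.
Proof. intros. rewrite cpow_mod. apply pow_incr. split; auto; apply Cmod_ge_0. Qed.

Lemma X_dom z : Cmod z <= Rr -> forall j, Cmod (RtoC (p j) * cpow z j)%C <= 1 * wj j.
Proof.
  intros Hz j. rewrite Cmod_mult, Cmod_R, Rabs_right by (apply Rle_ge; auto).
  unfold wj. pose proof (modpow_le z j Hz). pose proof (cube_ge j).
  assert (0 <= Rr ^ j) by (apply pow_le; lra). specialize (Hp0 j).
  assert (0 <= Cmod (cpow z j)) by apply Cmod_ge_0.
  assert (Cmod (cpow z j) <= (1 + INR j) ^ 3 * Rr ^ j) by nra.
  assert (p j * Cmod (cpow z j) <= p j * ((1 + INR j) ^ 3 * Rr ^ j)) by (apply Rmult_le_compat_l; auto).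
  nra.
Qed.

Lemma X1_dom z : Cmod z <= Rr -> forall j,
  Cmod (RtoC (p j) * (RtoC (INR j) * cpow z (j - 1)))%C <= 1 * wj j.
Proof.
  intros Hz j. rewrite !Cmod_mult, !Cmod_R, !Rabs_right by (apply Rle_ge; auto; apply pos_INR).
  unfold wj. pose proof (modpow_le z (j-1) Hz). pose proof (cube_ge j).
  assert (Rr ^ (j - 1) <= Rr ^ j) by (apply pow_le_mono; auto; lia).
  assert (0 <= Rr ^ j) by (apply pow_le; lra). specialize (Hp0 j).
  assert (0 <= Cmod (cpow z (j-1))) by apply Cmod_ge_0. pose proof (pos_INR j).
  assert (INR j * Cmod (cpow z (j - 1)) <= (1 + INR j) ^ 3 * Rr ^ j).
  { apply Rmult_le_compat; lra. }
  nra.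
Qed.

Lemma Y_dom z : Cmod z <= Rr -> forall j,
  Cmod (RtoC (p j) * (RtoC (INR j) * cpow z j))%C <= 1 * wj j.
Proof.
  intros Hz j. rewrite !Cmod_mult, !Cmod_R, !Rabs_right by (apply Rle_ge; auto; apply pos_INR).
  unfold wj. pose proof (modpow_le z j Hz). pose proof (cube_ge j).
  assert (0 <= Rr ^ j) by (apply pow_le; lra). specialize (Hp0 j).
  assert (0 <= Cmod (cpow z j)) by apply Cmod_ge_0. pose proof (pos_INR j).
  assert (INR j * Cmod (cpow z j) <= (1 + INR j) ^ 3 * Rr ^ j).
  { apply Rmult_le_compat; lra. }
  nra.
Qed.

Lemma Xc_bound z : Cmod z <= Rr -> Cmod (Xc z) <= W.
Proof. intros. rewrite <- (Rmult_1_l W). apply dom_bound. apply X_dom; auto. Qed.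

Lemma Xc_lip z z' : Cmod z <= Rr -> Cmod z' <= Rr ->
  Cmod (Xc z' - Xc z)%C <= W * Cmod (z' - z)%C.
Proof.
  intros Hz Hz'. unfold Xc. rewrite <- csum_minus by (eapply dom_acv; apply X_dom; eauto).
  rewrite Rmult_comm. apply dom_bound. intros j.
  replace (RtoC (p j) * cpow z' j - RtoC (p j) * cpow z j)%C with
    (RtoC (p j) * (cpow z' j - cpow z j))%C by ring.
  rewrite Cmod_mult, Cmod_R, Rabs_right by (apply Rle_ge; auto).
  pose proof (mono1 z' z Rr j Hz' Hz HR). unfold wj. pose proof (cube_ge j).
  assert (0 <= Rr ^ j) by (apply pow_le; lra). specialize (Hp0 j).
  assert (0 <= Cmod (z' - z)%C) by apply Cmod_ge_0.
  assert (INR j * Cmod (z' - z)%C * Rr ^ j <= Cmod (z' - z)%C * ((1 + INR j) ^ 3 * Rr ^ j)).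
  { assert (INR j * Cmod (z' - z)%C <= Cmod (z' - z)%C * (1 + INR j) ^ 3) by nra. nra. }
  nra.
Qed.

Lemma Xc_taylor z z' : Cmod z <= Rr -> Cmod z' <= Rr ->
  Cmod (Xc z' - Xc z - X1c z * (z' - z))%C <= W * Cmod (z' - z)%C ^ 2.
Proof.
  intros Hz Hz'. unfold Xc, X1c.
  rewrite <- csum_minus by (eapply dom_acv; apply X_dom; eauto).
  rewrite Cmult_comm, <- csum_scal by (eapply dom_acv; apply X1_dom; eauto).
  rewrite <- csum_minus.
  2:{ apply dom_acv with 2. intros j. eapply Rle_trans. apply Cmod_triangle.
      rewrite Cmod_opp. pose proof (X_dom z' Hz' j). pose proof (X_dom z Hz j). lra. }
  2:{ apply dom_acv with (Cmod (z' - z)%C). intros j. rewrite Cmod_mult.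
      pose proof (X1_dom z Hz j). pose proof (Cmod_ge_0 (z' - z)%C). nra. }
  rewrite Rmult_comm. apply dom_bound. intros j.
  replace (RtoC (p j) * cpow z' j - RtoC (p j) * cpow z j -
      (z' - z) * (RtoC (p j) * (RtoC (INR j) * cpow z (j - 1))))%C with
    (RtoC (p j) * (cpow z' j - cpow z j - RtoC (INR j) * cpow z (j - 1) * (z' - z)))%C by ring.
  rewrite Cmod_mult, Cmod_R, Rabs_right by (apply Rle_ge; auto).
  pose proof (mono2 z' z Rr j Hz' Hz HR). unfold wj. pose proof (cube_ge j).
  assert (0 <= Rr ^ j) by (apply pow_le; lra). specialize (Hp0 j).
  assert (0 <= Cmod (z' - z)%C ^ 2) by (apply pow_le, Cmod_ge_0).
  assert (INR j ^ 2 * Cmod (z' - z)%C ^ 2 * Rr ^ j <= Cmod (z' - z)%C ^ 2 * ((1 + INR j) ^ 3 * Rr ^ j)).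
  { assert (INR j ^ 2 * Cmod (z' - z)%C ^ 2 <= Cmod (z' - z)%C ^ 2 * (1 + INR j) ^ 3) by nra. nra. }
  nra.
Qed.


Lemma csum_ext t u : (forall j, t j = u j) -> csum t = csum u.
Proof. intros H. unfold csum. f_equal; apply Series_ext; intros; rewrite H; reflexivity. Qed.

Lemma exs_dom (f : nat -> R) c : (forall j, Rabs (f j) <= c * wj j) -> ex_series f.
Proof. intros H. apply ex_series_le_R with (fun j => c * wj j); auto. apply exs_scal; auto. Qed.

Lemma Xc_one : Xc (RtoC 1) = RtoC 1.
Proof.
  unfold Xc. rewrite (csum_ext _ (fun j => RtoC (p j))).
  rewrite csum_real. rewrite (is_series_unique _ _ Hp1). reflexivity.
  intros j. rewrite cpow_one. ring.
Qed.

Lemma Yc_one : Yc (RtoC 1) = RtoC (Series (fun j => INR j * p j)).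
Proof.
  unfold Yc. rewrite (csum_ext _ (fun j => RtoC (INR j * p j))).
  rewrite csum_real. reflexivity.
  intros j. rewrite cpow_one, RtoC_mult. ring.
Qed.

Lemma X1_Y z : Cmod z <= Rr -> (z * X1c z)%C = Yc z.
Proof.
  intros Hz. unfold X1c, Yc. rewrite <- csum_scal by (eapply dom_acv; apply X1_dom; eauto).
  apply csum_ext. intros j. destruct j.
  - simpl. replace (INR 0) with 0 by reflexivity. ring.
  - replace (S j - 1)%nat with j by lia. simpl cpow. ring.
Qed.

Lemma pgf_Xc z : pgf p z = Xc z.
Proof.
  unfold pgf, Xc, csum. f_equal; apply Series_ext; intros j; unfold Re, Im; simpl; ring.
Qed.

Lemma p_sum : Series p = 1.
Proof. apply is_series_unique; auto. Qed.

Lemma wj_ge j : p j <= wj j /\ INR j * p j <= wj j /\ INR j ^ 2 * p j <= wj j.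
Proof.
  unfold wj. pose proof (cube_ge j). specialize (Hp0 j).
  assert (1 <= Rr ^ j) by (apply pow_R1_Rle; auto).
  assert (1 <= (1 + INR j) ^ 3 * Rr ^ j) by nra.
  assert (INR j <= (1 + INR j) ^ 3 * Rr ^ j) by nra.
  assert (INR j ^ 2 <= (1 + INR j) ^ 3 * Rr ^ j) by nra.
  split; [|split]; nra.
Qed.

Lemma mu_nonneg : 0 <= Series (fun j => INR j * p j).
Proof.
  rewrite <- (Series_0 0%nat). apply Series_le.
  intros j; split; [lra|]. apply Rmult_le_pos; auto. apply pos_INR.
  apply exs_dom with 1. intros j. pose proof (wj_ge j). pose proof (pos_INR j).
  rewrite Rabs_right; [lra|]. apply Rle_ge, Rmult_le_pos; auto.
Qed.

Lemma logderiv_est (w : C) :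
  let mu := Series (fun j => INR j * p j) in
  let v := Series (fun j => INR j * (INR j - 1) * p j) - mu ^ 2 + mu in
  Cmod (1 + w)%C <= Rr ->
  Cmod (Yc (1 + w) - (RtoC mu + RtoC v * w) * Xc (1 + w))%C
    <= (1 + mu + Rabs v) * W * Cmod w ^ 2.
Proof.
  intros mu v HZ. set (Z := (1 + w)%C) in *.
  pose proof mu_nonneg as Hmu. fold mu in Hmu.
  assert (E1 : ex_series (fun j => INR j * p j)).
  { apply exs_dom with 1. intros j. pose proof (wj_ge j). pose proof (pos_INR j).
    rewrite Rabs_right; [lra|]. apply Rle_ge, Rmult_le_pos; auto. }
  assert (E2 : ex_series (fun j => INR j ^ 2 * p j)).
  { apply exs_dom with 1. intros j. pose proof (wj_ge j). specialize (Hp0 j).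
    rewrite Rabs_right; [lra|]. apply Rle_ge, Rmult_le_pos; auto. apply pow2_ge_0. }
  assert (E0 : ex_series p) by (exists 1; auto).
  assert (S1 : Series (fun j => p j * (INR j - mu)) = 0).
  { rewrite (Series_ext _ (fun j => INR j * p j - mu * p j)) by (intros; ring).
    rewrite Series_minus, Series_scal_l, p_sum; auto. fold mu. ring. apply exs_scal; auto. }
  assert (S2 : Series (fun j => p j * (INR j ^ 2 - mu * INR j - v)) = 0).
  { rewrite (Series_ext _ (fun j => (INR j * (INR j - 1) * p j + INR j * p j) - mu * (INR j * p j) - v * p j))
      by (intros; ring).
    rewrite Series_minus, Series_minus, Series_plus, !Series_scal_l, p_sum.
    fold mu. unfold v. ring.
    - apply ex_series_ext with (fun j => INR j ^ 2 * p j - INR j * p j). intros; simpl; ring.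
      apply exs_minus; auto.
    - auto.
    - apply exs_plus; auto. apply ex_series_ext with (fun j => INR j ^ 2 * p j - INR j * p j).
      intros; simpl; ring. apply exs_minus; auto.
    - apply exs_scal; auto.
    - apply exs_minus. apply exs_plus; auto. apply ex_series_ext with (fun j => INR j ^ 2 * p j - INR j * p j).
      intros; simpl; ring. apply exs_minus; auto. apply exs_scal; auto.
    - apply exs_scal; auto. }
  assert (AX : acv (fun j => RtoC (p j) * cpow Z j)%C) by (eapply dom_acv; apply X_dom; eauto).
  assert (AY : acv (fun j => RtoC (p j) * (RtoC (INR j) * cpow Z j))%C) by (eapply dom_acv; apply Y_dom; eauto).
  assert (AC1 : acv (fun j => RtoC (p j * (INR j - mu)))).
  { apply acv_le with (fun j => INR j * p j + mu * p j).
    intros j. rewrite Cmod_R. specialize (Hp0 j). pose proof (pos_INR j).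
    rewrite Rabs_mult, Rabs_right by lra. 
    assert (Rabs (INR j - mu) <= INR j + mu) by (apply Rabs_le; lra). nra.
    apply exs_plus; auto. apply exs_scal; auto. }
  assert (AC2 : acv (fun j => RtoC (p j * (INR j ^ 2 - mu * INR j - v)))).
  { apply acv_le with (fun j => INR j ^ 2 * p j + mu * (INR j * p j) + Rabs v * p j).
    intros j. rewrite Cmod_R. specialize (Hp0 j). pose proof (pos_INR j).
    rewrite Rabs_mult, (Rabs_right (p j)) by lra.
    assert (Rabs (INR j ^ 2 - mu * INR j - v) <= INR j ^ 2 + mu * INR j + Rabs v).
    { eapply Rle_trans. apply Rabs_triang. rewrite Rabs_Ropp.
      eapply Rle_trans. apply Rplus_le_compat_r. apply Rabs_triang. rewrite Rabs_Ropp.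
      rewrite (Rabs_right (INR j ^ 2)) by (apply Rle_ge, pow2_ge_0).
      rewrite Rabs_mult, (Rabs_right mu), (Rabs_right (INR j)) by lra. lra. }
    nra.
    apply exs_plus. apply exs_plus; auto. apply exs_scal; auto. apply exs_scal; auto. }
  assert (EQ : (Yc Z - (RtoC mu + RtoC v * w) * Xc Z)%C =
    csum (fun j => RtoC (p j) * ((RtoC (INR j) - RtoC mu) * (cpow Z j - 1 - RtoC (INR j) * w)
                                 - RtoC v * w * (cpow Z j - 1)))%C).
  { rewrite (csum_ext _ (fun j => (RtoC (p j) * (RtoC (INR j) * cpow Z j)
        - (RtoC mu + RtoC v * w) * (RtoC (p j) * cpow Z j))
        - RtoC (p j * (INR j - mu)) - w * RtoC (p j * (INR j ^ 2 - mu * INR j - v)))%C).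
    2:{ intros j. rewrite !RtoC_mult, !RtoC_minus, !RtoC_mult, RtoC_pow. unfold Z. simpl. ring. }
    assert (AB : acv (fun j => (RtoC mu + RtoC v * w) * (RtoC (p j) * cpow Z j))%C).
    { apply dom_acv with (Cmod (RtoC mu + RtoC v * w)%C). intros j. rewrite Cmod_mult.
      pose proof (X_dom Z HZ j). pose proof (Cmod_ge_0 (RtoC mu + RtoC v * w)%C). nra. }
    assert (AD : acv (fun j => w * RtoC (p j * (INR j ^ 2 - mu * INR j - v)))%C).
    { apply acv_le with (fun j => Cmod w * Cmod (RtoC (p j * (INR j ^ 2 - mu * INR j - v)))).
      intros; rewrite Cmod_mult; lra. apply exs_scal; auto. }
    assert (AYB : acv (fun j => RtoC (p j) * (RtoC (INR j) * cpow Z j)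
        - (RtoC mu + RtoC v * w) * (RtoC (p j) * cpow Z j))%C).
    { apply acv_le with (fun j => Cmod (RtoC (p j) * (RtoC (INR j) * cpow Z j))%C +
         Cmod ((RtoC mu + RtoC v * w) * (RtoC (p j) * cpow Z j))%C).
      intros j. unfold Cminus. eapply Rle_trans. apply Cmod_triangle. rewrite Cmod_opp. lra.
      apply exs_plus; auto. }
    assert (AYBC : acv (fun j => RtoC (p j) * (RtoC (INR j) * cpow Z j)
        - (RtoC mu + RtoC v * w) * (RtoC (p j) * cpow Z j) - RtoC (p j * (INR j - mu)))%C).
    { apply acv_le with (fun j => Cmod (RtoC (p j) * (RtoC (INR j) * cpow Z j)
        - (RtoC mu + RtoC v * w) * (RtoC (p j) * cpow Z j))%C +
         Cmod (RtoC (p j * (INR j - mu)))).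
      intros j. unfold Cminus at 1. eapply Rle_trans. apply Cmod_triangle. rewrite Cmod_opp. lra.
      apply exs_plus; auto. }
    rewrite (csum_minus _ _ AYBC AD), (csum_minus _ _ AYB AC1), (csum_minus _ _ AY AB).
    rewrite (csum_scal _ _ AX).
    rewrite (csum_scal w (fun j => RtoC (p j * (INR j ^ 2 - mu * INR j - v)))).
    2:{ exact AC2. }
    rewrite !csum_real, S1, S2.
    fold (Xc Z). fold (Yc Z). ring. }
  rewrite EQ.
  replace ((1 + mu + Rabs v) * W * Cmod w ^ 2) with (((1 + mu + Rabs v) * Cmod w ^ 2) * W) by ring.
  apply dom_bound. intros j.
  assert (HZ1 : Cmod (RtoC 1) <= Rr) by (rewrite Cmod_1; lra).
  pose proof (mono2 Z (RtoC 1) Rr j HZ HZ1 HR) as M2.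
  pose proof (mono1 Z (RtoC 1) Rr j HZ HZ1 HR) as M1.
  rewrite !cpow_one in M1. rewrite !cpow_one in M2.
  replace (Z - RtoC 1)%C with w in M1, M2 by (unfold Z; ring).
  replace (RtoC (INR j) * RtoC 1 * w)%C with (RtoC (INR j) * w)%C in M2 by ring.
  set (D2 := (cpow Z j - 1 - RtoC (INR j) * w)%C) in *.
  set (D1 := (cpow Z j - 1)%C) in *.
  assert (HD2 : Cmod D2 <= INR j ^ 2 * Cmod w ^ 2 * Rr ^ j) by exact M2.
  assert (HD1 : Cmod D1 <= INR j * Cmod w * Rr ^ j) by exact M1.
  rewrite Cmod_mult, Cmod_R, Rabs_right by (apply Rle_ge; auto).
  assert (Cmod ((RtoC (INR j) - RtoC mu) * D2 - RtoC v * w * D1)%C <=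
          (INR j + mu) * Cmod D2 + Rabs v * Cmod w * Cmod D1).
  { unfold Cminus at 1. eapply Rle_trans. apply Cmod_triangle. rewrite Cmod_opp, !Cmod_mult, Cmod_R.
    rewrite <- RtoC_minus, Cmod_R.
    assert (Rabs (INR j - mu) <= INR j + mu) by (apply Rabs_le; pose proof (pos_INR j); lra).
    pose proof (Cmod_ge_0 D2). nra. }
  unfold wj. pose proof (pos_INR j). specialize (Hp0 j).
  assert (0 <= Rr ^ j) by (apply pow_le; lra).
  assert (0 <= Cmod w) by apply Cmod_ge_0.
  assert (0 <= Rabs v) by apply Rabs_pos.
  set (q := Cmod w) in *. set (rj := Rr ^ j) in *. set (x := INR j) in *.
  assert ((x + mu) * Cmod D2 <= (x + mu) * (x ^ 2 * q ^ 2 * rj)) by (apply Rmult_le_compat_l; lra).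
  assert (Rabs v * q * Cmod D1 <= Rabs v * q * (x * q * rj)) by (apply Rmult_le_compat_l; nra).
  assert ((x + mu) * (x ^ 2 * q ^ 2 * rj) + Rabs v * q * (x * q * rj) <=
          (1 + mu + Rabs v) * q ^ 2 * ((1 + x) ^ 3 * rj)).
  { assert (x ^ 3 <= (1 + x) ^ 3) by nra.
    assert (x ^ 2 <= (1 + x) ^ 3) by nra.
    assert (x <= (1 + x) ^ 3) by nra.
    assert (mu * x ^ 2 <= mu * (1 + x) ^ 3) by (apply Rmult_le_compat_l; lra).
    assert (Rabs v * x <= Rabs v * (1 + x) ^ 3) by (apply Rmult_le_compat_l; lra).
    assert ((x + mu) * x ^ 2 + Rabs v * x <= (1 + mu + Rabs v) * (1 + x) ^ 3) by nra.
    assert (0 <= q ^ 2 * rj) by nra. nra. }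
  assert (0 <= Cmod ((RtoC x - RtoC mu) * D2 - RtoC v * w * D1)%C) by apply Cmod_ge_0.
  nra.
Qed.


Lemma deriv_unique (f : C -> C) (Z dA : C) (n : nat) :
  (forall z, f z = cpow (Xc z) n) -> Cmod Z < Rr ->
  is_derive (K := C_AbsRing) (V := C_NormedModule) f Z dA ->
  dA = (RtoC (INR n) * cpow (Xc Z) (n - 1) * X1c Z)%C.
Proof.
  intros Hf HZ Hd.
  set (D := (RtoC (INR n) * cpow (Xc Z) (n - 1) * X1c Z)%C).
  pose proof W_pos as HW.
  set (M := W + 1).
  assert (HM : 1 <= M) by (unfold M; lra).
  assert (HMn : 0 <= M ^ n) by (apply pow_le; lra).
  set (K := INR n ^ 2 * W ^ 2 * M ^ n + INR n * M ^ n * W).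
  assert (HK : 0 <= K).
  { unfold K. pose proof (pos_INR n). apply Rplus_le_le_0_compat; repeat apply Rmult_le_pos; nra. }
  assert (Kb : forall h : R, 0 < h -> h <= Rr - Cmod Z ->
     Cmod (f (Z + RtoC h) - f Z - RtoC h * D)%C <= K * h ^ 2).
  { intros h Hh Hh2. set (y := (Z + RtoC h)%C).
    assert (Hyz : Cmod (y - Z)%C = h).
    { replace (y - Z)%C with (RtoC h) by (unfold y; ring). rewrite Cmod_R, Rabs_right; lra. }
    assert (Hy : Cmod y <= Rr).
    { unfold y. eapply Rle_trans. apply Cmod_triangle. rewrite Cmod_R, Rabs_right; lra. }
    assert (HZ' : Cmod Z <= Rr) by lra.
    rewrite !Hf. set (a := Xc y). set (b := Xc Z).
    assert (Ha : Cmod a <= M) by (unfold a, M; pose proof (Xc_bound y Hy); lra).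
    assert (Hb : Cmod b <= M) by (unfold b, M; pose proof (Xc_bound Z HZ'); lra).
    pose proof (Xc_lip Z y HZ' Hy) as L1. rewrite Hyz in L1. fold a b in L1.
    pose proof (Xc_taylor Z y HZ' Hy) as L2. rewrite Hyz in L2. fold a b in L2.
    replace (y - Z)%C with (RtoC h) in L2 by (unfold y; ring).
    pose proof (mono2 a b M n Ha Hb HM) as L3.
    replace (cpow a n - cpow b n - RtoC h * D)%C with
      ((cpow a n - cpow b n - RtoC (INR n) * cpow b (n - 1) * (a - b))
       + RtoC (INR n) * cpow b (n - 1) * (a - b - X1c Z * RtoC h))%C
      by (unfold D; fold b; ring).
    eapply Rle_trans. apply Cmod_triangle. rewrite !Cmod_mult, Cmod_R, Rabs_right by (apply Rle_ge, pos_INR).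
    rewrite cpow_mod.
    assert (Cmod b ^ (n - 1) <= M ^ n).
    { eapply Rle_trans. apply pow_incr. split; [apply Cmod_ge_0| exact Hb].
      apply pow_le_mono; auto; lia. }
    assert (0 <= Cmod (a - b)%C) by apply Cmod_ge_0.
    assert (Cmod (a - b)%C ^ 2 <= (W * h) ^ 2) by (apply pow_incr; lra).
    pose proof (pos_INR n).
    assert (INR n ^ 2 * Cmod (a - b)%C ^ 2 * M ^ n <= INR n ^ 2 * (W * h) ^ 2 * M ^ n).
    { apply Rmult_le_compat_r; auto. apply Rmult_le_compat_l; auto. apply pow2_ge_0. }
    assert (INR n * Cmod b ^ (n - 1) * Cmod (a - b - X1c Z * RtoC h)%C <= INR n * M ^ n * (W * h ^ 2)).
    { apply Rmult_le_compat. apply Rmult_le_pos; auto. apply pow_le, Cmod_ge_0.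
      apply Cmod_ge_0. apply Rmult_le_compat_l; auto. exact L2. }
    unfold K. nra. }
  apply Ceq_minus. apply Cmod_eq_0.
  destruct (Req_dec (Cmod (dA - D)%C) 0) as [H0|H0]; auto.
  exfalso. set (c := Cmod (dA - D)%C) in *.
  assert (Hc : 0 < c) by (pose proof (Cmod_ge_0 (dA - D)%C); fold c in H; lra).
  destruct Hd as [_ Hd].
  assert (Hc4 : 0 < c / 4) by lra.
  destruct (Hd Z (fun P H => H) (mkposreal _ Hc4)) as [δ Hδ].
  set (h := Rmin (δ / 2) (Rmin (Rr - Cmod Z) (c / (4 * (K + 1))))).
  assert (Hh : 0 < h).
  { unfold h. pose proof (cond_pos δ). apply Rmin_pos. lra. apply Rmin_pos. lra.
    apply Rdiv_lt_0_compat; lra. }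
  assert (Hh1 : h <= δ / 2) by apply Rmin_l.
  assert (Hh2 : h <= Rr - Cmod Z) by (eapply Rle_trans; [apply Rmin_r|apply Rmin_l]).
  assert (Hh3 : h <= c / (4 * (K + 1))) by (eapply Rle_trans; [apply Rmin_r|apply Rmin_r]).
  specialize (Hδ (Z + RtoC h)%C).
  assert (Hhz : Cmod (Z + RtoC h - Z)%C = h).
  { replace (Z + RtoC h - Z)%C with (RtoC h) by ring. rewrite Cmod_R, Rabs_right; lra. }
  assert (Hball : @ball (AbsRing_UniformSpace C_AbsRing) Z δ (Z + RtoC h)%C).
  { change (Cmod (Z + RtoC h - Z)%C < δ). rewrite Hhz. pose proof (cond_pos δ). lra. }
  specialize (Hδ Hball).
  change (Cmod (f (Z + RtoC h) - f Z - (Z + RtoC h - Z) * dA)%C <= c / 4 * Cmod (Z + RtoC h - Z)%C) in Hδ.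
  rewrite Hhz in Hδ.
  replace (Z + RtoC h - Z)%C with (RtoC h) in Hδ by ring.
  pose proof (Kb h Hh Hh2) as Kh.
  assert (E : Cmod (RtoC h * (dA - D))%C <=
     Cmod (f (Z + RtoC h) - f Z - RtoC h * D)%C + Cmod (f (Z + RtoC h) - f Z - RtoC h * dA)%C).
  { replace (RtoC h * (dA - D))%C with ((f (Z + RtoC h) - f Z - RtoC h * D) -
        (f (Z + RtoC h) - f Z - RtoC h * dA))%C by ring.
    unfold Cminus at 1. eapply Rle_trans. apply Cmod_triangle. rewrite Cmod_opp. lra. }
  rewrite Cmod_mult, Cmod_R, Rabs_right in E by lra. fold c in E.
  assert (K * h <= c / 4).
  { assert (K * h <= (K + 1) * h) by lra.
    assert ((K + 1) * h <= (K + 1) * (c / (4 * (K + 1)))) by (apply Rmult_le_compat_l; lra).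
    replace ((K + 1) * (c / (4 * (K + 1)))) with (c / 4) in H1 by (field; lra). lra. }
  assert (h * c <= K * h ^ 2 + c / 4 * h) by lra.
  assert (h * c <= h * (c / 2)) by nra.
  nra.
Qed.

End Gen.

Lemma bernoulli (e : R) j : 0 <= e -> 1 + INR j * e <= (1 + e) ^ j.
Proof.
  intros He. induction j. simpl. lra.
  rewrite S_INR. simpl. assert (0 <= INR j) by apply pos_INR. nra.
Qed.

Lemma exists_Rr (p : nat -> R) : (forall j, 0 <= p j) -> Rbar_lt 1 (CV_radius p) ->
  exists Rr, 1 < Rr /\ ex_series (fun j => p j * (1 + INR j) ^ 3 * Rr ^ j).
Proof.
  intros Hp0 Hr.
  assert (HR2 : exists R2, 1 < R2 /\ Rbar_lt R2 (CV_radius p)).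
  { destruct (CV_radius p) as [r| |] eqn:E; simpl in Hr.
    - exists ((1 + r) / 2). split; simpl; lra.
    - exists 2. split; simpl; auto; lra.
    - contradiction. }
  destruct HR2 as [R2 [H1 H2]].
  assert (Hcv : ex_series (fun n => Rabs (p n * R2 ^ n))).
  { apply CV_disk_inside. rewrite Rabs_right by lra. auto. }
  set (e := Rmin 1 ((R2 - 1) / 15)).
  assert (He : 0 < e) by (apply Rmin_pos; lra).
  assert (He1 : e <= 1) by apply Rmin_l.
  assert (He2 : e <= (R2 - 1) / 15) by apply Rmin_r.
  exists (1 + e). split; [lra|].
  apply ex_series_le_R with (fun j => (1 + / e) ^ 3 * Rabs (p j * R2 ^ j)).
  2: apply exs_scal; auto.
  intros j. specialize (Hp0 j).
  assert (0 <= R2 ^ j) by (apply pow_le; lra).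
  rewrite Rabs_right.
  2:{ apply Rle_ge. apply Rmult_le_pos. apply Rmult_le_pos; auto. apply pow_le; pose proof (pos_INR j); lra. apply pow_le; lra. }
  rewrite (Rabs_right (p j * R2 ^ j)) by (apply Rle_ge, Rmult_le_pos; auto).
  set (q := (1 + e) ^ j).
  assert (Hq1 : 1 <= q) by (apply pow_R1_Rle; lra).
  assert (Hb : 1 + INR j <= (1 + / e) * q).
  { pose proof (bernoulli e j (Rlt_le _ _ He)). fold q in H0.
    assert (INR j <= (q - 1) / e) by (apply Rmult_le_reg_r with e; [lra|]; field_simplify; lra).
    assert ((q - 1) / e <= q / e) by (apply Rmult_le_compat_r; [apply Rlt_le, Rinv_0_lt_compat; lra| lra]).
    unfold Rdiv in *. nra. }
  assert (Hb3 : (1 + INR j) ^ 3 <= ((1 + / e) * q) ^ 3).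
  { apply pow_incr. split; [pose proof (pos_INR j); lra| auto]. }
  assert (Hq4 : q ^ 3 * q <= R2 ^ j).
  { unfold q. rewrite <- pow_mult. rewrite <- pow_add. replace (j * 3 + j)%nat with (4 * j)%nat by lia.
    rewrite pow_mult. apply pow_incr. split. apply pow_le; lra.
    assert (e ^ 2 <= e) by nra. assert (e ^ 3 <= e) by nra. assert (e ^ 4 <= e) by nra.
    replace ((1 + e) ^ 4) with (1 + 4 * e + 6 * e ^ 2 + 4 * e ^ 3 + e ^ 4) by ring. lra. }
  replace (((1 + / e) * q) ^ 3) with ((1 + / e) ^ 3 * q ^ 3) in Hb3 by ring.
  assert (0 <= (1 + / e) ^ 3) by (apply pow_le; apply Rlt_le, Rplus_lt_0_compat; [lra|apply Rinv_0_lt_compat; lra]).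
  assert (0 <= q ^ 3) by (apply pow_le; lra).
  assert ((1 + INR j) ^ 3 * q <= (1 + / e) ^ 3 * q ^ 3 * q) by (apply Rmult_le_compat_r; lra).
  assert ((1 + / e) ^ 3 * q ^ 3 * q <= (1 + / e) ^ 3 * R2 ^ j) by (rewrite Rmult_assoc; apply Rmult_le_compat_l; lra).
  change ((1 + e) ^ j) with q.
  replace (p j * (1 + INR j) ^ 3 * q) with (p j * ((1 + INR j) ^ 3 * q)) by ring.
  replace ((1 + / e) ^ 3 * (p j * R2 ^ j)) with (p j * ((1 + / e) ^ 3 * R2 ^ j)) by ring.
  apply Rmult_le_compat_l; lra.
Qed.

Lemma csqrt_mod2 (w : C) : Cmod (csqrt w) ^ 2 = Cmod w.
Proof.
  rewrite Cmod2_alt. unfold csqrt, Re, Im; simpl fst; simpl snd.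
  pose proof (re_le_Cmod w). unfold Re in H.
  assert (Rabs (fst w) <= Cmod w) by auto.
  assert (A1 : 0 <= (Cmod w + fst w) / 2) by (pose proof (Rle_abs (fst w)); pose proof (Rabs_maj2 (fst w)); lra).
  assert (A2 : 0 <= (Cmod w - fst w) / 2) by (pose proof (Rle_abs (fst w)); pose proof (Rabs_maj2 (fst w)); lra).
  destruct (Rle_dec 0 (snd w)).
  - rewrite !pow2_sqrt by auto. field.
  - replace ((- sqrt ((Cmod w - fst w) / 2)) ^ 2) with (sqrt ((Cmod w - fst w) / 2) ^ 2) by ring.
    rewrite !pow2_sqrt by auto. field.
Qed.

Lemma delta_id (g r N v a0' b0 mu sq w L : C) :
  r <> 0%C -> b0 <> 0%C -> mu <> 0%C -> v <> 0%C ->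
  N = ((r*r - g*r)/mu)%C -> a0' = (g*mu/(b0*v*r))%C ->
  (g*r*sq/b0 - (N*L - r*r) = g*g*(1 + sq/b0) - N*v*(w - a0'*(b0+sq)) - N*(L - mu - v*w))%C.
Proof. intros. subst. field. repeat split; auto. Qed.

Lemma sqle (a b : R) : 0 <= b -> a ^ 2 <= b ^ 2 -> a <= b.
Proof.
  intros Hb H. destruct (Rle_or_lt a b) as [|Hl]; auto.
  assert (b * b < a * a) by (apply Rmult_le_0_lt_compat; lra). simpl in H. lra.
Qed.

Lemma Cmod_pair_bounds (x y : R) :
  Rabs x <= Cmod (x, y) /\ Rabs y <= Cmod (x, y) /\ Cmod (x, y) <= Rabs x + Rabs y.
Proof.
  pose proof (Cmod2_alt (x, y)) as H. unfold Re, Im in H; simpl in H.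
  pose proof (Cmod_ge_0 (x, y)). set (m := Cmod (x, y)) in *.
  pose proof (Rabs_pos x). pose proof (Rabs_pos y).
  pose proof (pow2_abs x). pose proof (pow2_abs y).
  assert (0 <= Rabs x * Rabs y) by nra.
  split; [|split]; apply sqle; auto; nra.
Qed.

Lemma aux_x (x K R' t t1 e : R) : 0 <= x -> 0 <= K -> 0 <= R' -> 0 <= t -> t <= t1 -> 0 <= e ->
  x ^ 2 <= K * t -> t1 * (K + R' + 1) = e ^ 2 -> x <= e.
Proof.
  intros. apply sqle; auto.
  assert (K * t <= K * t1) by (apply Rmult_le_compat_l; auto).
  assert (K * t1 <= t1 * (K + R' + 1)) by nra. lra.
Qed.

Lemma aux_x3 (c t t2 e : R) : 0 <= c -> 0 <= t -> t <= t2 -> 0 <= e -> t2 = e / (c + 1) -> c * t <= e.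
Proof.
  intros. subst. assert (c * t <= c * (e / (c + 1))) by (apply Rmult_le_compat_l; auto).
  assert (c * (e / (c + 1)) <= e).
  { apply (Rmult_le_reg_r (c + 1)); [lra|]. replace (c * (e / (c + 1)) * (c + 1)) with (c * e) by (field; lra). nra. }
  lra.
Qed.

Lemma aux_w2 (m x1 x2 x3 a b c t : R) : 0 <= m -> m <= x1 + x2 + x3 -> 0 <= x1 -> 0 <= x2 -> 0 <= x3 ->
  x1 ^ 2 <= a * t -> x2 ^ 2 <= b * t -> x3 ^ 2 <= c * t -> m ^ 2 <= 3 * (a + b + c) * t.
Proof.
  intros. assert (m ^ 2 <= (x1 + x2 + x3) ^ 2) by (apply pow_incr; lra).
  assert (3 * (x1 ^ 2 + x2 ^ 2 + x3 ^ 2) - (x1 + x2 + x3) ^ 2 = (x1 - x2) ^ 2 + (x2 - x3) ^ 2 + (x1 - x3) ^ 2) by ring.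
  pose proof (pow2_ge_0 (x1 - x2)). pose proof (pow2_ge_0 (x2 - x3)). pose proof (pow2_ge_0 (x1 - x3)).
  replace (3 * (a + b + c) * t) with (3 * (a * t + b * t + c * t)) by ring. lra.
Qed.

Lemma aux_le_sq (x : R) : x <= 1 + x ^ 2.
Proof. nra. Qed.

Theorem lemma5p2 (p : nat -> R) :
  is_distribution p ->
  Rbar_lt (Finite 1) (CV_radius p) ->
  0 < pgf_mean p ->
  0 < pgf_var p ->
  (forall (r1 : R) (z : C), 0 < r1 -> Rbar_lt (Finite r1) (CV_radius p) ->
     Cmod z = r1 -> z <> RtoC r1 -> Cmod (pgf p z) < Re (pgf p (RtoC r1))) ->
  let mu := pgf_mean p in
  let sigma := sqrt (pgf_var p) in
  forall (cg Cg CZ : R) (rho : nat -> R),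
    0 < cg -> is_lim_seq rho 0 ->
  exists (C0 : R) (s0 : nat),
  forall (s n : nat) (k : Z) (Zk dA : C),
    (s0 <= s)%nat -> (0 < s)%nat -> (0 < n)%nat ->
    let A := fun z : C => cpow (pgf p z) n in
    let muA := INR n * mu in
    muA < INR s ->
    (exists j : nat, 0 < p j /\ INR s / INR n < INR j) ->
    let gamma := sqrt (INR s) * (1 - muA / INR s) in
    cg <= gamma <= Cg ->
    Rabs (IZR k) <= rho s * INR s ->
    let a0 := sqrt (2 * mu) / sigma in
    let b0 := gamma * sqrt mu / (sigma * sqrt 2) in
    let sq := csqrt (Cminus (RtoC (b0 ^ 2)) (Cmult (RtoC (2 * PI * IZR k)) Ci)) in
    1 < Cmod Zk -> Rbar_lt (Finite (Cmod Zk)) (CV_radius p) ->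
    cpow Zk s = A Zk ->
    Cmod (Cminus Zk (Cplus (RtoC 1)
            (Cmult (RtoC (a0 / sqrt (INR s))) (Cplus (RtoC b0) sq))))
      <= CZ * (1 + Rabs (IZR k)) / INR s ->
    is_derive (K := C_AbsRing) (V := C_NormedModule) A Zk dA ->
    exists E : C,
      Copp (Cdiv (RtoC (INR s - muA))
                 (Cminus (Cmult (RtoC (INR s)) (cpow Zk (s - 1))) dA))
      = Cmult (Cmult (Cdiv (RtoC b0) sq) (Cinv (cpow Zk (s - 1))))
              (Cplus (RtoC 1) E)
      /\ Cmod E <= C0 * (1 + Rabs (IZR k)) / sqrt (INR s).
Proof.
  intros Hdist Hr Hmu Hvar _ mu sigma cg Cg CZ rho Hcg Hrho.
  destruct Hdist as [Hp0 Hp1].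
  destruct (exists_Rr p Hp0 Hr) as [Rr [HRr Hw]].
  assert (HR1 : 1 <= Rr) by lra.
  pose proof (W_pos p Hp0 Rr HR1 Hw) as HW.
  set (W := Series (fun j => p j * (1 + INR j) ^ 3 * Rr ^ j)) in *.
  set (v := pgf_var p) in *.
  assert (Hv : v = Series (fun j => INR j * (INR j - 1) * p j) - mu ^ 2 + mu) by reflexivity.
  assert (Hsig : 0 < sigma) by (apply sqrt_lt_R0; auto).
  assert (Hsig2 : sigma * sigma = v) by (apply sqrt_sqrt; lra).
  fold mu in Hmu.
  set (Cg' := Rmax Cg cg).
  assert (HCg : cg <= Cg') by apply Rmax_r.
  assert (HCg2 : Cg <= Cg') by apply Rmax_l.
  assert (Hsmu : 0 < sqrt mu) by (apply sqrt_lt_R0; auto).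
  assert (Hs2 : 0 < sqrt 2) by (apply sqrt_lt_R0; lra).
  set (bl := cg * sqrt mu / (sigma * sqrt 2)).
  set (bh := Cg' * sqrt mu / (sigma * sqrt 2)).
  assert (Hbl : 0 < bl) by (unfold bl; apply Rdiv_lt_0_compat; apply Rmult_lt_0_compat; auto).
  assert (Hblh : bl <= bh) by (unfold bl, bh; apply Rmult_le_compat_r;
     [apply Rlt_le, Rinv_0_lt_compat, Rmult_lt_0_compat; auto| apply Rmult_le_compat_r; lra]).
  set (a0c := sqrt (2 * mu) / sigma).
  assert (Ha0 : 0 < a0c) by (apply Rdiv_lt_0_compat; auto; apply sqrt_lt_R0; lra).
  set (B1 := bh ^ 2 + 2 * PI).
  set (B2 := Rmin (bl ^ 2) (2 * PI) / 2).
  assert (HB2 : 0 < B2) by (unfold B2; apply Rdiv_lt_0_compat; [apply Rmin_pos; [nra| pose proof PI_RGT_0; lra]| lra]).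
  set (B3 := 3 * (a0c ^ 2 * bh ^ 2 + a0c ^ 2 * B1 + CZ ^ 2)).
  set (B4 := Cg' ^ 2 * (1 + (1 + B1) / bl) + v * Rabs CZ / mu + 2 * (1 + mu + v) * W * B3 / mu).
  set (sB2 := sqrt B2).
  assert (HsB2 : 0 < sB2) by (apply sqrt_lt_R0; auto).
  set (C0 := 2 * B4 * bh / (cg * sB2)).
  set (ew := Rmin ((Rr - 1) / 2) (1 / (2 * W + 2))).
  assert (Hew : 0 < ew) by (unfold ew; apply Rmin_pos; [lra| apply Rdiv_lt_0_compat; lra]).
  set (t1 := (ew / 3) ^ 2 / (a0c ^ 2 * B1 + a0c ^ 2 * bh ^ 2 + 1)).
  set (t2 := (ew / 3) / (Rabs CZ + 1)).
  set (t3 := (cg / bh) ^ 2 * B2 / (4 * B4 ^ 2 + 1)).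
  set (tau := Rmin 1 (Rmin t1 (Rmin t2 t3))).
  assert (HB1 : 0 < B1) by (unfold B1; pose proof PI_RGT_0; nra).
  assert (HB3 : 0 <= B3) by (unfold B3; nra).
  assert (Hbh : 0 < bh) by lra.
  assert (HB4 : 0 <= B4).
  { unfold B4. pose proof (Rabs_pos CZ).
    assert (0 <= Cg' ^ 2 * (1 + (1 + B1) / bl)) by (apply Rmult_le_pos; [nra| assert (0 < (1 + B1) / bl) by (apply Rdiv_lt_0_compat; lra); lra]).
    assert (0 <= v * Rabs CZ / mu) by (apply Rmult_le_pos; [nra| apply Rlt_le, Rinv_0_lt_compat; auto]).
    assert (0 <= 2 * (1 + mu + v) * W * B3 / mu) by (apply Rmult_le_pos; [repeat apply Rmult_le_pos; nra| apply Rlt_le, Rinv_0_lt_compat; auto]).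
    lra. }
  assert (Ht1 : 0 < t1) by (unfold t1; apply Rdiv_lt_0_compat; nra).
  assert (Ht2 : 0 < t2) by (unfold t2; apply Rdiv_lt_0_compat; pose proof (Rabs_pos CZ); lra).
  assert (Hcgbh : 0 < (cg / bh) ^ 2) by (apply pow_lt, Rdiv_lt_0_compat; lra).
  assert (Ht3 : 0 < t3) by (unfold t3; apply Rdiv_lt_0_compat; [apply Rmult_lt_0_compat; auto| nra]).
  assert (Htau : 0 < tau) by (unfold tau; repeat apply Rmin_pos; lra).
  assert (Htau1 : tau <= 1) by apply Rmin_l.
  assert (Htau2 : tau <= t1) by (eapply Rle_trans; [apply Rmin_r| apply Rmin_l]).
  assert (Htau3 : tau <= t2) by (eapply Rle_trans; [apply Rmin_r| eapply Rle_trans; [apply Rmin_r| apply Rmin_l]]).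
  assert (Htau4 : tau <= t3) by (eapply Rle_trans; [apply Rmin_r| eapply Rle_trans; [apply Rmin_r| apply Rmin_r]]).
  set (th := tau / 2).
  assert (Hth : 0 < th) by (unfold th; lra).
  destruct (proj2 (is_lim_seq_spec rho 0) Hrho (mkposreal th Hth)) as [N1 HN1].
  destruct (proj2 (is_lim_seq_spec INR p_infty) is_lim_seq_INR (1 / th)) as [N2 HN2].
  exists C0, (Nat.max N1 N2).
  intros s n k Zk dA Hs0 Hs Hn A muA HmuA _ gamma Hgam Hk a0 b0 sq HZ1 HZr Hroot HZ Hder.
  specialize (HN1 s ltac:(lia)). specialize (HN2 s ltac:(lia)). simpl in HN1.
  set (S := INR s) in *. set (N := INR n) in *. set (ka := Rabs (IZR k)) in *.
  assert (HS : 0 < S) by (apply lt_0_INR; lia).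
  assert (HN : 0 < N) by (apply lt_0_INR; lia).
  assert (Hka : 0 <= ka) by apply Rabs_pos.
  set (r := sqrt S).
  assert (Hr0 : 0 < r) by (apply sqrt_lt_R0; auto).
  assert (Hrr : r * r = S) by (apply sqrt_sqrt; lra).
  set (t := (1 + ka) / S).
  assert (Ht : t <= tau).
  { assert (1 / S < th).
    { assert (1 < S * th).
      { apply (Rmult_lt_reg_r (/ th)); [apply Rinv_0_lt_compat; auto|].
        replace (S * th * / th) with S by (field; lra). unfold Rdiv in HN2. lra. }
      apply (Rmult_lt_reg_l S); auto. replace (S * (1 / S)) with 1 by (field; lra). lra. }
    assert (ka / S <= rho s).
    { apply Rmult_le_reg_r with S; auto. field_simplify; lra. }
    assert (rho s < th) by (rewrite Rminus_0_r in HN1; apply Rabs_def2 in HN1; lra).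
    unfold t. replace ((1 + ka) / S) with (1 / S + ka / S) by (field; lra). unfold th in *. lra. }
  assert (Ht0 : 0 < t) by (unfold t; apply Rdiv_lt_0_compat; lra).
  assert (HtS : 1 / S <= t) by (unfold t; apply Rmult_le_compat_r; [apply Rlt_le, Rinv_0_lt_compat|]; lra).
  assert (HtS2 : (1 + ka) = t * S) by (unfold t; field; lra).
  assert (Hgr : gamma * r = S - N * mu).
  { unfold gamma, muA. fold S r. replace (r * (1 - N * mu / S) * r) with (r * r * (1 - N * mu / S)) by ring.
    rewrite Hrr. field. lra. }
  assert (Hg0 : 0 < gamma) by lra.
  assert (Hb0 : bl <= b0 <= bh).
  { unfold b0, bl, bh. split; apply Rmult_le_compat_r;
     try (apply Rlt_le, Rinv_0_lt_compat, Rmult_lt_0_compat; auto);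
     apply Rmult_le_compat_r; lra. }
  assert (Hb00 : 0 < b0) by lra.
  assert (Hab : a0c * b0 * v = gamma * mu).
  { unfold a0c, b0. rewrite <- Hsig2. rewrite sqrt_mult by lra.
    assert (sqrt mu * sqrt mu = mu) by (apply sqrt_sqrt; lra).
    transitivity (gamma * (sqrt mu * sqrt mu)); [field; split; lra| rewrite H; ring]. }
  set (wq := Cminus (RtoC (b0 ^ 2)) (Cmult (RtoC (2 * PI * IZR k)) Ci)) in *.
  assert (Hwq : wq = (b0 ^ 2, - (2 * PI * IZR k))).
  { unfold wq. apply injective_projections; unfold Cminus, Cplus, Copp, Cmult, Ci, RtoC; simpl; ring. }
  assert (Hsq2 : Cmod sq ^ 2 = Cmod wq) by apply csqrt_mod2.
  set (Csq2 := Cmod sq ^ 2) in *.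
  assert (HPI : 0 < PI) by apply PI_RGT_0.
  assert (Hwqb : b0 ^ 2 <= Cmod wq /\ 2 * PI * ka <= Cmod wq /\ Cmod wq <= b0 ^ 2 + 2 * PI * ka).
  { rewrite Hwq. destruct (Cmod_pair_bounds (b0 ^ 2) (- (2 * PI * IZR k))) as [A1 [A2 A3]].
    rewrite Rabs_right in A1, A3 by (apply Rle_ge, pow2_ge_0).
    rewrite Rabs_Ropp, Rabs_mult, (Rabs_right (2 * PI)) in A2, A3 by lra. fold ka in A2, A3. lra. }
  assert (HsqB1 : Csq2 <= B1 * (1 + ka)).
  { assert (b0 ^ 2 <= bh ^ 2) by (apply pow_incr; lra). unfold B1. nra. }
  assert (HsqB2 : B2 * (1 + ka) <= Csq2).
  { assert (bl ^ 2 <= b0 ^ 2) by (apply pow_incr; lra).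
    assert (B2 <= bl ^ 2 / 2) by (unfold B2; pose proof (Rmin_l (bl ^ 2) (2 * PI)); lra).
    assert (B2 <= PI) by (unfold B2; pose proof (Rmin_r (bl ^ 2) (2 * PI)); lra).
    nra. }
  assert (Hsq0 : 0 <= Cmod sq) by apply Cmod_ge_0.
  assert (HsqsB : sB2 <= Cmod sq).
  { apply sqle; auto. unfold sB2. rewrite pow2_sqrt by lra. fold Csq2. nra. }
  assert (Hsqnz : sq <> 0%C) by (apply Cmod_gt_0; lra).
  set (w := (Zk - 1)%C).
  set (zeta := (Zk - (1 + RtoC (a0c / r) * (RtoC b0 + sq)))%C).
  assert (Hzeta : Cmod zeta <= Rabs CZ * t).
  { change (Cmod zeta <= CZ * (1 + ka) / S) in HZ. unfold t.
    replace (CZ * (1 + ka) / S) with (CZ * ((1 + ka) / S)) in HZ by (field; lra).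
    assert (CZ * ((1 + ka) / S) <= Rabs CZ * ((1 + ka) / S)) by (apply Rmult_le_compat_r; [fold t; lra| apply Rle_abs]).
    lra. }
  assert (Hwdec : w = (RtoC (a0c / r) * (RtoC b0 + sq) + zeta)%C) by (unfold w, zeta; ring).
  set (x1 := a0c * b0 / r). set (x2 := a0c * Cmod sq / r). set (x3 := Rabs CZ * t).
  assert (Hw1 : Cmod w <= x1 + x2 + x3).
  { rewrite Hwdec. eapply Rle_trans. apply Cmod_triangle. rewrite Cmod_mult, Cmod_R.
    rewrite Rabs_right by (apply Rle_ge, Rlt_le, Rdiv_lt_0_compat; auto).
    assert (Cmod (RtoC b0 + sq)%C <= b0 + Cmod sq).
    { eapply Rle_trans. apply Cmod_triangle. rewrite Cmod_R, Rabs_right; lra. }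
    assert (0 < a0c / r) by (apply Rdiv_lt_0_compat; auto).
    unfold x1, x2, x3. 
    replace (a0c * b0 / r + a0c * Cmod sq / r) with (a0c / r * (b0 + Cmod sq)) by (field; lra).
    nra. }
  assert (Hx1 : x1 ^ 2 <= a0c ^ 2 * bh ^ 2 * t).
  { unfold x1. replace ((a0c * b0 / r) ^ 2) with (a0c ^ 2 * b0 ^ 2 * (1 / S)) by (rewrite <- Hrr; field; lra).
    assert (b0 ^ 2 <= bh ^ 2) by (apply pow_incr; lra).
    assert (0 <= a0c ^ 2) by nra.
    apply Rmult_le_compat; try nra. apply Rlt_le, Rdiv_lt_0_compat; lra. }
  assert (Hx2 : x2 ^ 2 <= a0c ^ 2 * B1 * t).
  { unfold x2. replace ((a0c * Cmod sq / r) ^ 2) with (a0c ^ 2 * Csq2 / S) by (unfold Csq2; rewrite <- Hrr; field; lra).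
    rewrite HtS2 in HsqB1. 
    replace (a0c ^ 2 * Csq2 / S) with (a0c ^ 2 * (Csq2 / S)) by (field; lra).
    replace (a0c ^ 2 * B1 * t) with (a0c ^ 2 * (B1 * t * S / S)) by (field; lra).
    apply Rmult_le_compat_l. nra. apply Rmult_le_compat_r. apply Rlt_le, Rinv_0_lt_compat; lra. lra. }
  assert (Hx0 : 0 <= x1 /\ 0 <= x2 /\ 0 <= x3).
  { unfold x1, x2, x3. split; [|split].
    apply Rlt_le, Rdiv_lt_0_compat; [nra|lra].
    apply Rmult_le_pos; [nra| apply Rlt_le, Rinv_0_lt_compat; lra].
    apply Rmult_le_pos; [apply Rabs_pos|lra]. }
  assert (Ht1e : t1 * (a0c ^ 2 * bh ^ 2 + a0c ^ 2 * B1 + 1) = (ew / 3) ^ 2) by (unfold t1; field; nra).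
  assert (Hx1e : x1 <= ew / 3).
  { apply (aux_x x1 (a0c ^ 2 * bh ^ 2) (a0c ^ 2 * B1) t t1);
    [lra|apply Rmult_le_pos; apply pow2_ge_0|apply Rmult_le_pos; [apply pow2_ge_0|lra]|lra|lra|lra|exact Hx1|exact Ht1e]. }
  assert (Hx2e : x2 <= ew / 3).
  { apply (aux_x x2 (a0c ^ 2 * B1) (a0c ^ 2 * bh ^ 2) t t1);
    [lra|apply Rmult_le_pos; [apply pow2_ge_0|lra]|apply Rmult_le_pos; apply pow2_ge_0|lra|lra|lra|exact Hx2|].
    rewrite <- Ht1e. ring. }
  assert (Hx3e : x3 <= ew / 3).
  { unfold x3. apply (aux_x3 (Rabs CZ) t t2); [apply Rabs_pos|lra|lra|lra|reflexivity]. }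
  assert (Hwe : Cmod w <= ew) by lra.
  assert (HwB3 : Cmod w ^ 2 <= B3 * t).
  { assert (x3 ^ 2 <= CZ ^ 2 * t).
    { unfold x3. rewrite Rpow_mult_distr, pow2_abs.
      assert (t * t <= t * 1) by (apply Rmult_le_compat_l; lra).
      assert (t ^ 2 <= t) by (simpl; lra).
      apply Rmult_le_compat_l; [apply pow2_ge_0| lra]. }
    unfold B3. replace (3 * (a0c ^ 2 * bh ^ 2 + a0c ^ 2 * B1 + CZ ^ 2) * t) with
      (3 * (a0c ^ 2 * bh ^ 2 + a0c ^ 2 * B1 + CZ ^ 2) * t) by ring.
    apply (aux_w2 (Cmod w) x1 x2 x3); try lra; apply Cmod_ge_0. }
  assert (Hew1 : ew <= (Rr - 1) / 2) by apply Rmin_l.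
  assert (Hew2 : ew <= 1 / (2 * W + 2)) by apply Rmin_r.
  assert (HZw : Zk = (1 + w)%C) by (unfold w; ring).
  assert (HZle : Cmod Zk <= 1 + Cmod w).
  { rewrite HZw. eapply Rle_trans. apply Cmod_triangle. rewrite Cmod_1. lra. }
  assert (HZlt : Cmod Zk < Rr) by lra.
  assert (HZR : Cmod Zk <= Rr) by lra.
  assert (HZ1R : Cmod (1 + w)%C <= Rr) by (rewrite <- HZw; lra).
  set (X := Xc p Zk). set (Y := Yc p Zk). set (X1 := X1c p Zk).
  assert (HX1 : Cmod (X - 1)%C <= 1 / 2).
  { pose proof (Xc_lip p Hp0 Rr HR1 Hw (RtoC 1) Zk) as HL. rewrite Xc_one in HL by auto.
    fold W X in HL. rewrite Cmod_1 in HL. specialize (HL ltac:(lra) HZR).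
    assert (HH : Cmod (Zk - 1)%C = Cmod w) by reflexivity. rewrite HH in HL.
    assert (W * Cmod w <= W * (1 / (2 * W + 2))) by (apply Rmult_le_compat_l; lra).
    assert (W * (1 / (2 * W + 2)) <= 1 / 2) by (apply (Rmult_le_reg_r (2 * W + 2)); [lra|]; field_simplify; lra).
    lra. }
  assert (HXge : 1 / 2 <= Cmod X).
  { assert (Cmod (RtoC 1) <= Cmod X + Cmod (1 - X)%C).
    { replace (RtoC 1) with (X + (1 - X))%C at 1 by ring. apply Cmod_triangle. }
    rewrite Cmod_1 in H. replace (1 - X)%C with (- (X - 1))%C in H by ring. rewrite Cmod_opp in H. lra. }
  assert (HX0 : X <> 0%C) by (apply Cmod_gt_0; lra).
  pose proof (logderiv_est p Hp0 Hp1 Rr HR1 Hw w HZ1R) as Hlog.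
  rewrite <- HZw in Hlog. fold X Y W in Hlog.
  change (Cmod (Y - (RtoC mu + RtoC v * w) * X)%C <= (1 + mu + Rabs v) * W * Cmod w ^ 2) in Hlog.
  rewrite Rabs_right in Hlog by lra.
  set (L := (Y / X)%C).
  set (etaL := (L - RtoC mu - RtoC v * w)%C).
  assert (HetaL : Cmod etaL <= 2 * (1 + mu + v) * W * (B3 * t)).
  { assert (etaL = ((Y - (RtoC mu + RtoC v * w) * X) / X)%C) by (unfold etaL, L; field; auto).
    rewrite H, Cmod_div by auto.
    assert (0 <= (1 + mu + v) * W) by (apply Rmult_le_pos; lra).
    assert ((1 + mu + v) * W * Cmod w ^ 2 <= (1 + mu + v) * W * (B3 * t)) by (apply Rmult_le_compat_l; lra).
    set (F := Cmod (Y - (RtoC mu + RtoC v * w) * X)%C) in *.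
    assert (0 <= F) by apply Cmod_ge_0.
    apply (Rmult_le_reg_r (Cmod X)); [lra|].
    replace (F / Cmod X * Cmod X) with F by (field; lra).
    assert (2 * (1 + mu + v) * W * (B3 * t) * Cmod X >= (1 + mu + v) * W * (B3 * t)).
    { assert (0 <= (1 + mu + v) * W * (B3 * t)) by (apply Rmult_le_pos; [lra| apply Rmult_le_pos; lra]).
      set (Q := (1 + mu + v) * W * (B3 * t)) in *.
      replace (2 * (1 + mu + v) * W * (B3 * t) * Cmod X) with (2 * (Q * Cmod X)) by (unfold Q; ring).
      assert (Q * (1 / 2) <= Q * Cmod X) by (apply Rmult_le_compat_l; lra). lra. }
    lra. }
  set (D := (RtoC N * L - RtoC S)%C).
  set (Dl := (RtoC gamma * RtoC r * sq / RtoC b0 - D)%C).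
  assert (HDl : Dl = (RtoC gamma * RtoC gamma * (1 + sq / RtoC b0) - RtoC N * RtoC v * zeta - RtoC N * etaL)%C).
  { unfold Dl, D, etaL, zeta. rewrite <- Hrr, RtoC_mult.
    replace (Zk - (1 + RtoC (a0c / r) * (RtoC b0 + sq)))%C with (w - RtoC (a0c / r) * (RtoC b0 + sq))%C
      by (unfold w; ring).
    apply delta_id.
    - intro HH. apply RtoC_inj in HH. lra.
    - intro HH. apply RtoC_inj in HH. lra.
    - intro HH. apply RtoC_inj in HH. lra.
    - intro HH. apply RtoC_inj in HH. lra.
    - rewrite <- !RtoC_mult, <- RtoC_minus, <- RtoC_div by lra. f_equal.
      apply (Rmult_eq_reg_r mu); [|lra]. rewrite Hrr. field_simplify; lra.
    - rewrite <- !RtoC_mult, <- RtoC_div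
        by (apply Rmult_integral_contrapositive; split; [apply Rmult_integral_contrapositive; split|]; lra).
      f_equal. rewrite <- Hab. field. repeat split; lra. }
  set (T1 := Cg' ^ 2 * (1 + (1 + B1) / bl)).
  set (T2 := v * Rabs CZ / mu).
  set (T3 := 2 * (1 + mu + v) * W * B3 / mu).
  assert (HB4e : B4 = T1 + T2 + T3) by reflexivity.
  assert (HNS : N <= S / mu).
  { apply (Rmult_le_reg_r mu); auto. replace (S / mu * mu) with S by (field; lra).
    assert (0 < gamma * r) by (apply Rmult_lt_0_compat; lra). lra. }
  assert (HSt : S * t = 1 + ka) by lra.
  assert (Hbd1 : gamma * gamma * Cmod (1 + sq / RtoC b0)%C <= T1 * (1 + ka)).
  { assert (Cmod (1 + sq / RtoC b0)%C <= 1 + Cmod sq / b0).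
    { eapply Rle_trans. apply Cmod_triangle. rewrite Cmod_1, Cmod_div, Cmod_R, Rabs_right by
        (try apply Rle_ge; try (intro HH; apply RtoC_inj in HH); lra). lra. }
    assert (Cmod sq <= 1 + Csq2) by (unfold Csq2; apply aux_le_sq).
    assert (Cmod sq / b0 <= (1 + Csq2) / bl).
    { apply (Rle_trans _ (Cmod sq / bl)).
      apply Rmult_le_compat_l; [lra| apply Rinv_le_contravar; lra].
      apply Rmult_le_compat_r; [apply Rlt_le, Rinv_0_lt_compat; lra| lra]. }
    assert ((1 + Csq2) / bl <= (1 + B1) / bl * (1 + ka)).
    { replace ((1 + B1) / bl * (1 + ka)) with ((1 + ka + B1 * (1 + ka)) / bl) by (field; lra).
      apply Rmult_le_compat_r; [apply Rlt_le, Rinv_0_lt_compat; lra| lra]. }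
    assert (HA : Cmod (1 + sq / RtoC b0)%C <= (1 + (1 + B1) / bl) * (1 + ka)).
    { replace ((1 + (1 + B1) / bl) * (1 + ka)) with (1 + ka + (1 + B1) / bl * (1 + ka)) by ring. lra. }
    assert (gamma * gamma <= Cg' ^ 2) by (simpl; rewrite Rmult_1_r; apply Rmult_le_compat; lra).
    apply Rle_trans with (Cg' ^ 2 * ((1 + (1 + B1) / bl) * (1 + ka))).
    apply Rmult_le_compat; [apply Rmult_le_pos; lra| apply Cmod_ge_0| lra| lra].
    right. unfold T1. ring. }
  assert (Hbd2 : N * v * Cmod zeta <= T2 * (1 + ka)).
  { assert (N * v * Cmod zeta <= S / mu * v * (Rabs CZ * t)).
    { apply Rmult_le_compat; [apply Rmult_le_pos; lra| apply Cmod_ge_0| apply Rmult_le_compat_r; lra| lra]. }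
    unfold T2. rewrite <- HSt. replace (S / mu * v * (Rabs CZ * t)) with (v * Rabs CZ / mu * (S * t)) in H by (field; lra).
    lra. }
  assert (Hbd3 : N * Cmod etaL <= T3 * (1 + ka)).
  { assert (N * Cmod etaL <= S / mu * (2 * (1 + mu + v) * W * (B3 * t))).
    { apply Rmult_le_compat; [lra| apply Cmod_ge_0| lra| lra]. }
    unfold T3. rewrite <- HSt.
    replace (S / mu * (2 * (1 + mu + v) * W * (B3 * t))) with (2 * (1 + mu + v) * W * B3 / mu * (S * t)) in H by (field; lra).
    lra. }
  assert (HDlb : Cmod Dl <= B4 * (1 + ka)).
  { rewrite HDl. unfold Cminus. eapply Rle_trans. apply Cmod_triangle. rewrite Cmod_opp.
    eapply Rle_trans. apply Rplus_le_compat_r. apply Cmod_triangle. rewrite Cmod_opp.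
    rewrite !Cmod_mult, !Cmod_R, !Rabs_right by lra.
    rewrite HB4e. lra. }
  set (G := gamma * r * Cmod sq / b0).
  assert (HGc : Cmod (RtoC gamma * RtoC r * sq / RtoC b0)%C = G).
  { rewrite Cmod_div by (intro HH; apply RtoC_inj in HH; lra).
    rewrite !Cmod_mult, !Cmod_R, !Rabs_right by lra. reflexivity. }
  set (c := cg / bh).
  assert (Hc0 : 0 < c) by (unfold c; apply Rdiv_lt_0_compat; lra).
  assert (Hgb : c <= gamma / b0).
  { assert (E1 : gamma / b0 = sigma * sqrt 2 / sqrt mu) by (unfold b0; field; repeat split; lra).
    assert (E2 : c = cg / Cg' * (sigma * sqrt 2 / sqrt mu)) by (unfold c, bh; field; repeat split; lra).
    rewrite E1, E2. assert (cg / Cg' <= 1) by (apply (Rmult_le_reg_r Cg'); [lra|]; field_simplify; lra).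
    assert (0 < sigma * sqrt 2 / sqrt mu) by (apply Rdiv_lt_0_compat; [apply Rmult_lt_0_compat|]; lra).
    set (K0 := sigma * sqrt 2 / sqrt mu) in *.
    assert (cg / Cg' * K0 <= 1 * K0) by (apply Rmult_le_compat_r; lra). lra. }
  set (Qs := c * r * Cmod sq).
  assert (HQsG : Qs <= G).
  { unfold Qs, G. replace (gamma * r * Cmod sq / b0) with (gamma / b0 * r * Cmod sq) by (field; lra).
    apply Rmult_le_compat_r; auto. apply Rmult_le_compat_r; lra. }
  assert (HQs0 : 0 <= Qs) by (unfold Qs; apply Rmult_le_pos; [apply Rmult_le_pos|]; lra).
  assert (HB42 : 0 <= B4 ^ 2) by apply pow2_ge_0.
  assert (Ht3e : t3 * (4 * B4 ^ 2 + 1) = c ^ 2 * B2) by (unfold t3, c; field; repeat split; lra).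
  assert (H4B : 4 * B4 ^ 2 * t <= c ^ 2 * B2).
  { assert (t * (4 * B4 ^ 2 + 1) <= t3 * (4 * B4 ^ 2 + 1)) by (apply Rmult_le_compat_r; lra).
    assert (t * (4 * B4 ^ 2 + 1) = 4 * B4 ^ 2 * t + t) by ring.
    lra. }
  assert (H2B4 : 2 * B4 * (1 + ka) <= G).
  { apply sqle; [lra|].
    assert (Qs ^ 2 <= G ^ 2) by (apply pow_incr; lra).
    assert (EQs : Qs ^ 2 = c ^ 2 * S * Csq2) by (unfold Qs, Csq2; rewrite <- Hrr; ring).
    assert (c ^ 2 * S * (B2 * (1 + ka)) <= c ^ 2 * S * Csq2)
      by (apply Rmult_le_compat_l; [apply Rmult_le_pos; [apply pow2_ge_0|lra]| lra]).
    assert (E4 : (2 * B4 * (1 + ka)) ^ 2 = (4 * B4 ^ 2 * t) * (S * (1 + ka))).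
    { transitivity (4 * B4 ^ 2 * (1 + ka) * (1 + ka)); [ring| rewrite <- HSt at 1; ring]. }
    assert ((4 * B4 ^ 2 * t) * (S * (1 + ka)) <= (c ^ 2 * B2) * (S * (1 + ka)))
      by (apply Rmult_le_compat_r; [apply Rmult_le_pos; lra| lra]).
    replace (c ^ 2 * S * (B2 * (1 + ka))) with ((c ^ 2 * B2) * (S * (1 + ka))) in H by ring.
    lra. }
  assert (HG0 : 0 < G) by (unfold G; apply Rdiv_lt_0_compat; [apply Rmult_lt_0_compat; [apply Rmult_lt_0_compat|]|]; lra).
  assert (HDlow : G / 2 <= Cmod D).
  { assert (HDD : D = (RtoC gamma * RtoC r * sq / RtoC b0 - Dl)%C) by (unfold Dl; ring).
    assert (G <= Cmod D + Cmod Dl).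
    { rewrite <- HGc. replace (RtoC gamma * RtoC r * sq / RtoC b0)%C with (D + Dl)%C by (unfold Dl; ring).
      apply Cmod_triangle. }
    assert (0 <= B4 * (1 + ka)) by (apply Rmult_le_pos; lra).
    lra. }
  assert (HD0 : D <> 0%C) by (apply Cmod_gt_0; lra).
  set (P := cpow Zk (s - 1)). set (Q := cpow X (n - 1)).
  assert (HdA : dA = (RtoC N * Q * X1)%C).
  { apply (deriv_unique p Hp0 Rr HR1 Hw A Zk dA n); auto.
    intros z. unfold A. rewrite pgf_Xc. reflexivity. }
  assert (HZP : (Zk * P)%C = (X * Q)%C).
  { unfold A in Hroot. rewrite pgf_Xc in Hroot. fold X in Hroot.
    assert (Hss : s = Nat.succ (s - 1)) by (destruct s; [inversion Hs| simpl; rewrite Nat.sub_0_r; reflexivity]). rewrite Hss in Hroot.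
    assert (Hnn : n = Nat.succ (n - 1)) by (destruct n; [inversion Hn| simpl; rewrite Nat.sub_0_r; reflexivity]). rewrite Hnn in Hroot. exact Hroot. }
  assert (HY : (Zk * X1)%C = Y) by (apply (X1_Y p Hp0 Rr HR1 Hw Zk HZR)).
  assert (HZ0 : Zk <> 0%C) by (apply Cmod_gt_0; lra).
  assert (HP0 : P <> 0%C) by (apply cpow_nz; auto).
  assert (Hkey : (RtoC S * P - dA)%C = (- (P * D))%C).
  { rewrite HdA. unfold D, L. rewrite <- HY.
    assert (HQ : Q = (Zk * P / X)%C) by (rewrite HZP; field; auto).
    rewrite HQ. field. auto. }
  assert (Hb0C : RtoC b0 <> 0%C) by (intro HH; apply RtoC_inj in HH; lra).
  exists (Dl / D)%C. split.
  - change (Cminus (Cmult (RtoC S) P) dA) with ((RtoC S * P - dA)%C). rewrite Hkey.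
    replace (S - muA) with (gamma * r) by (unfold muA; lra).
    rewrite RtoC_mult. unfold Dl. field. repeat split; auto.
  - rewrite Cmod_div by auto.
    apply (Rmult_le_reg_r (Cmod D)); [lra|].
    replace (Cmod Dl / Cmod D * Cmod D) with (Cmod Dl) by (field; lra).
    assert (HC0 : 0 <= C0) by (unfold C0; apply Rmult_le_pos; [apply Rmult_le_pos; lra| apply Rlt_le, Rinv_0_lt_compat, Rmult_lt_0_compat; lra]).
    assert (HQs2 : c * r * sB2 <= G).
    { apply Rle_trans with Qs; auto. unfold Qs. apply Rmult_le_compat_l; [apply Rmult_le_pos; lra| lra]. }
    assert (HCe : C0 / r * (c * r * sB2) = 2 * B4) by (unfold C0, c; field; repeat split; lra).
    assert (HCG : 2 * B4 <= C0 / r * G).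
    { rewrite <- HCe. apply Rmult_le_compat_l; auto. apply Rmult_le_pos; [lra| apply Rlt_le, Rinv_0_lt_compat; lra]. }
    assert (HCD : C0 * (1 + ka) / r * (G / 2) <= C0 * (1 + ka) / r * Cmod D).
    { apply Rmult_le_compat_l; auto. apply Rmult_le_pos; [apply Rmult_le_pos; lra| apply Rlt_le, Rinv_0_lt_compat; lra]. }
    replace (C0 * (1 + ka) / r * (G / 2)) with ((1 + ka) / 2 * (C0 / r * G)) in HCD by (field; lra).
    assert ((1 + ka) / 2 * (2 * B4) <= (1 + ka) / 2 * (C0 / r * G)) by (apply Rmult_le_compat_l; lra).
    lra.
Qed.
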